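(* Let $n\geqslant 2$. For $\alpha\in\mathbf{I}\mathbb{N}_{\infty}^n$ let $\sigma_\alpha\in H(\mathbb{I})$ be the unique unit such that $\alpha=\sigma_\alpha\varepsilon$ for some idempotent $\varepsilon$ of $\mathbf{I}\mathbb{N}_{\infty}^n$. Then $\alpha\,\mathfrak{C}_{\mathbf{mg}}\,\beta$ if and only if $\sigma_\alpha=\sigma_\beta$; the quotient semigroup $\mathbf{I}\mathbb{N}_{\infty}^n/\mathfrak{C}_{\mathbf{mg}}$ is isomorphic to the symmetric group $\mathscr{S}_n$, and the natural homomorphism $\mathbf{I}\mathbb{N}_{\infty}^n\to\mathbf{I}\mathbb{N}_{\infty}^n/\mathfrak{C}_{\mathbf{mg}}$ corresponds to the map $\alpha\mapsto\sigma_\alpha$ onto $H(\mathbb{I})\cong\mathscr{S}_n$.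
   Context: $\mathbb{N}=\{1,2,3,\ldots\}$, $n\geqslant 2$, and $\mathbb{N}^n$ carries the Euclidean metric $d$. A partial isometry of $\mathbb{N}^n$ is an injective partial map $\alpha\colon\mathbb{N}^n\rightharpoonup\mathbb{N}^n$ with $d((\mathbf{x})\alpha,(\mathbf{y})\alpha)=d(\mathbf{x},\mathbf{y})$ for all $\mathbf{x},\mathbf{y}\in\operatorname{dom}\alpha$; it is cofinite if $\mathbb{N}^n\setminus\operatorname{dom}\alpha$ and $\mathbb{N}^n\setminus\operatorname{ran}\alpha$ are finite. $\mathbf{I}\mathbb{N}_{\infty}^n$ is the monoid of all partial cofinite isometries of $\mathbb{N}^n$ under composition of partial maps written on the right. Its identity is the identity map $\mathbb{I}$ of $\mathbb{N}^n$ and $H(\mathbb{I})$ is its group of units. $\mathscr{S}_n$ is the symmetric group on $\{1,\ldots,n\}$. For an inverse semigroup $S$, the least group congruence $\mathfrak{C}_{\mathbf{mg}}$ is defined by $a\,\mathfrak{C}_{\mathbf{mg}}\,b$ iff $ae=be$ for some idempotent $e\in S$. *)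

(* Defs.v *)
From HB Require Import structures.
From mathcomp Require Import all_boot all_order all_algebra all_fingroup.
Set Implicit Arguments. Unset Strict Implicit. Unset Printing Implicit Defensive.

(* Points of N^n are represented inside nat^n; N = {1,2,...} is carved out by
   the predicate [inN]. *)
Definition point (n : nat) := {ffun 'I_n -> nat}.

Definition inN (n : nat) (x : point n) : bool := [forall i, 0 < x i].

Definition dist2 (n : nat) (x y : point n) : nat :=
  \sum_(i < n) (`|x i - y i|%N) ^ 2.

Definition pmapN (n : nat) := point n -> option (point n).

(* Composition written on the right: (x)(alpha beta) = ((x)alpha)beta. *)
Definition pcompN (n : nat) (a b : pmapN n) : pmapN n :=
  fun x => obind b (a x).

Definition pidN (n : nat) : pmapN n := fun x => if inN x then Some x else None.

Definition IN (n : nat) (a : pmapN n) : Prop :=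
  (forall x y, a x = Some y -> inN x /\ inN y) /\
  (forall x y z, a x = Some z -> a y = Some z -> x = y) /\
  (* isometry (equality of distances <-> equality of squared distances) *)
  (forall x y x' y', a x = Some x' -> a y = Some y' -> dist2 x' y' = dist2 x y) /\
  (exists s : seq (point n), forall x, inN x -> a x = None -> x \in s) /\
  (exists s : seq (point n), forall y, inN y -> (forall x, a x <> Some y) -> y \in s).

Definition idemp (n : nat) (e : pmapN n) : Prop := IN e /\ pcompN e e = e.

Definition unitIN (n : nat) (s : pmapN n) : Prop :=
  IN s /\ exists t, IN t /\ pcompN s t = @pidN n /\ pcompN t s = @pidN n.

Definition unit_part (n : nat) (a s : pmapN n) : Prop :=
  unitIN s /\ exists e, idemp e /\ a = pcompN s e.

(* The least group congruence C_mg. *)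
Definition Cmg (n : nat) (a b : pmapN n) : Prop :=
  exists e, idemp e /\ pcompN a e = pcompN b e.

(* Main.v *)
Require Import Defs.
From mathcomp Require Import all_boot all_order all_algebra all_fingroup.
From mathcomp Require Import zify ring lra.
From Stdlib Require Import ClassicalEpsilon FunctionalExtensionality.
Set Implicit Arguments. Unset Strict Implicit. Unset Printing Implicit Defensive.

Section Basics.
Import Order.TTheory GRing.Theory Num.Theory.
Local Open Scope ring_scope.
Variable n : nat.

Definition D2 (x y : point n) : int := \sum_(k < n) ((x k)%:Z - (y k)%:Z) ^+ 2.

Lemma sqabs (z : int) : Posz ((`|z|%N) ^ 2)%N = z ^+ 2.
Proof. by rewrite expnS expn1 PoszM abszE -normrM ger0_norm -?expr2 ?sqr_ge0. Qed.

Lemma D2E (x y : point n) : (dist2 x y)%:Z = D2 x y.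
Proof.
rewrite /dist2 /D2 (big_morph Posz PoszD (erefl _)).
by apply: eq_bigr => k _; rewrite sqabs.
Qed.

Definition dot (x y w : point n) : int :=
  \sum_(k < n) ((x k)%:Z - (w k)%:Z) * ((y k)%:Z - (w k)%:Z).

Lemma polar (x y w : point n) : D2 x w + D2 y w - D2 x y = 2 * dot x y w.
Proof.
rewrite /D2 /dot -big_split /= -sumrB mulr_sumr; apply: eq_bigr => k _.
ring.
Qed.

Lemma dot_iso (x y w x' y' w' : point n) :
  D2 x' w' = D2 x w -> D2 y' w' = D2 y w -> D2 x' y' = D2 x y ->
  dot x' y' w' = dot x y w.
Proof.
move=> h1 h2 h3; have := polar x y w; have := polar x' y' w'.
rewrite h1 h2 h3 => ->; lia.
Qed.

Lemma sq1 (f : 'I_n -> int) : \sum_k f k ^+ 2 = 1 ->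
  exists k, (f k = 1 \/ f k = -1) /\ forall j, j != k -> f j = 0.
Proof.
move=> hs.
have [k hk] : exists k, f k != 0.
  apply/existsP; apply: contraT; rewrite negb_exists => /forallP h.
  move: hs; rewrite big1 // => k _; have := h k; rewrite negbK => /eqP ->.
  by rewrite expr0n.
exists k; move: hs; rewrite (bigD1 k) //=.
have hr : 0 <= \sum_(i < n | i != k) f i ^+ 2 by apply: sumr_ge0 => i _; exact: sqr_ge0.
move: hk hr; set r := \sum_(i < n | i != k) _ => hk hr hs.
move: hs; rewrite expr2 => hs.
have hh : (f k < 0) || (0 < f k) by rewrite -neq_lt.
have hr0 : r = 0 by case/orP: hh => hh; nia.
split; first by case/orP: hh => hh; nia.
move=> j hj; have := psumr_eq0P (fun i _ => sqr_ge0 (f i)) hr0 hj.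
by move/eqP; rewrite sqrf_eq0 => /eqP.
Qed.
End Basics.

Section Perm.
Variable n : nat.
Implicit Types (x y : point n) (p q : 'S_n) (a b : pmapN n).

Definition act x p : point n := [ffun k => x ((p^-1)%g k)].
Definition sigma p : pmapN n := fun x => if inN x then Some (act x p) else None.
Definition agree a p := forall x y, a x = Some y -> y = act x p.

Lemma actM x p q : act (act x p) q = act x (p * q)%g.
Proof. by apply/ffunP => k; rewrite !ffunE invMg permM. Qed.

Lemma act1 x : act x 1%g = x.
Proof. by apply/ffunP => k; rewrite !ffunE invg1 perm1. Qed.

Lemma actK x p : act (act x p) (p^-1)%g = x.
Proof. by rewrite actM mulgV act1. Qed.

Lemma actKV x p : act (act x (p^-1)%g) p = x.
Proof. by rewrite actM mulVg act1. Qed.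

Lemma act_inN x p : inN (act x p) = inN x.
Proof.
apply/forallP/forallP => h k.
  by have := h (p k); rewrite ffunE -permM mulgV perm1.
by rewrite ffunE.
Qed.

Lemma act_dist2 x y p : dist2 (act x p) (act y p) = dist2 x y.
Proof.
rewrite /dist2 (reindex_inj (@perm_inj _ p)) /=.
by apply: eq_bigr => k _; rewrite !ffunE -permM mulgV perm1.
Qed.

Lemma bound_seq (s : seq (point n)) : exists K, forall z : point n, z \in s -> forall j, z j < K.
Proof.
elim: s => [|z s [K HK]]; first by exists 0.
exists (maxn K (\max_j z j).+1) => t; rewrite inE => /orP [/eqP -> | ht] j.
  by rewrite leq_max ltnS leq_bigmax orbT.
by rewrite leq_max HK.
Qed.

Lemma big_dom a : IN a -> exists K, 0 < K /\ forall x, inN x -> (exists j, K <= x j) ->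
  exists y, a x = Some y.
Proof.
case=> _ [_ [_ [[s hs] _]]]; have [K HK] := bound_seq s.
exists K.+1; split => // x hx [j hj].
case e : (a x) => [y|]; first by exists y.
exfalso; have := HK _ (hs _ hx e) j; lia.
Qed.

Lemma big_ran a : IN a -> exists K, 0 < K /\ forall y, inN y -> (exists j, K <= y j) ->
  exists x, a x = Some y.
Proof.
case=> _ [_ [_ [_ [s hs]]]]; have [K HK] := bound_seq s.
exists K.+1; split => // y hy [j hj].
case: (classic (exists x, a x = Some y)) => // hn.
exfalso; have := HK _ (hs _ hy (fun x e => hn (ex_intro _ x e))) j; lia.
Qed.

Definition dpt (K : nat) : point n := [ffun k : 'I_n => K + k].

Lemma dpt_inj K : injective (fun k => dpt K k).
Proof. by move=> i j; rewrite !ffunE => /eqP; rewrite eqn_add2l => /eqP/ord_inj. Qed.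

Lemma dpt_inN K : 0 < K -> inN (dpt K).
Proof. by move=> hK; apply/forallP => k; rewrite ffunE; lia. Qed.

Lemma agree_uniq a p q x y : agree a p -> agree a q -> a x = Some y ->
  injective (fun k => x k) -> p = q.
Proof.
move=> hp hq e hx; have := hp _ _ e; rewrite (hq _ _ e) => /ffunP h.
apply: invg_inj; apply/permP => k; apply: hx; have := h k; rewrite !ffunE => ->//.
Qed.

End Perm.

Lemma inNP n (x : point n) : inN x -> forall i, 0 < x i.
Proof. by move/forallP. Qed.

Section Core.
Import Order.TTheory GRing.Theory Num.Theory.
Local Open Scope ring_scope.
Variable n : nat.
Hypothesis hn : (1 < n)%N.

Lemma other (i : 'I_n) : exists j : 'I_n, j != i.
Proof.
have h0 : (0 < n)%N by lia.
case: (eqVneq i (Ordinal h0)) => [->|hi]; last by exists (Ordinal h0); rewrite eq_sym.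
by exists (Ordinal hn); apply/eqP => /(congr1 val) /=.
Qed.

Lemma core (a : pmapN n) : IN a -> exists p, agree a p.
Proof.
move=> ha; have [hdom [hinj [hiso _]]] := ha.
have [K1 [hK1 hD]] := big_dom ha.
have [K2 [hK2 hR]] := big_ran ha.
have hD2 : forall x y x' y', a x = Some x' -> a y = Some y' -> D2 x' y' = D2 x y.
  by move=> x y x' y' e1 e2; rewrite -!D2E (hiso _ _ _ _ e1 e2).
pose w : point n := [ffun k => K1].
pose wi (i : 'I_n) : point n := [ffun k => (K1 + (k == i))%N].
have winN : inN w by apply/forallP => k; rewrite ffunE.
have wiinN : forall i, inN (wi i) by move=> i; apply/forallP => k; rewrite ffunE; lia.
pose fw := odflt w (a w).
pose fwi i := odflt w (a (wi i)).
have hfw : a w = Some fw.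
  rewrite /fw; case e: (a w) => [y0|] //=; exfalso.
  have [|y0 e0] := hD w winN; last by rewrite e in e0.
  have [j _] := other (Ordinal hn); by exists j; rewrite ffunE.
have hfwi : forall i, a (wi i) = Some (fwi i).
  move=> i; rewrite /fwi; case e: (a (wi i)) => [y0|] //=; exfalso.
  have [|y0 e0] := hD (wi i) (wiinN i); last by rewrite e in e0.
  exists i; rewrite ffunE; lia.
pose u i k : int := ((fwi i k)%:Z - (fw k)%:Z)%R.
have hu : forall i, exists k, (u i k = 1 \/ u i k = -1) /\ forall j, j != k -> u i j = 0.
  move=> i; apply: sq1; rewrite -[X in X = _]/(D2 (fwi i) fw) (hD2 _ _ _ _ (hfwi i) hfw) /D2 (bigD1 i) //= big1.
    by rewrite !ffunE eqxx; lia.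
  by move=> k hk; rewrite !ffunE (negbTE hk); lia.
pose pi i := odflt i [pick k | u i k != 0].
have hpi : forall i, (u i (pi i) = 1 \/ u i (pi i) = -1) /\ forall j, j != pi i -> u i j = 0.
  move=> i; have [k [hk1 hk2]] := hu i; rewrite /pi.
  case: pickP => [k' hk'|hnone] /=.
    case: (eqVneq k' k) => [->|hne]; first by split.
    by move: hk'; rewrite hk2 ?eqxx.
  by exfalso; have := hnone k; case: hk1 => ->.
have formula : forall x y, a x = Some y -> forall i,
    (((y (pi i))%:Z - (fw (pi i))%:Z) * u i (pi i) = (x i)%:Z - K1%:Z)%R.
  move=> x y e i; have := dot_iso (hD2 _ _ _ _ e hfw) (hD2 _ _ _ _ (hfwi i) hfw)
    (hD2 _ _ _ _ e (hfwi i)).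
  rewrite /dot (bigD1 (pi i)) //= big1; last first.
    by move=> k hk; have := (hpi i).2 k hk; rewrite /u => ->; rewrite GRing.mulr0.
  rewrite (bigD1 i) //= big1; last first.
    by move=> k hk; rewrite !ffunE (negbTE hk); lia.
  by rewrite !ffunE eqxx /u; lia.
have pi_inj : injective pi.
  move=> i j hij; apply/eqP; apply: contraT => hne.
  have := formula _ _ (hfwi i) j; rewrite -hij !ffunE eq_sym (negbTE hne).
  have := (hpi i).1; have := (hpi j).1; rewrite -hij /u; lia.
have key : forall x y, a x = Some y -> forall i, y (pi i) = x i.
  move=> x y e i.
  have [j hj] := other i.
  pose mk (v : nat) : point n := [ffun k => if k == i then v else K1].
  have mkinN : forall v, (0 < v)%N -> inN (mk v).
    by move=> v hv; apply/forallP => k; rewrite ffunE; case: ifP.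
  have mkD : forall v, (0 < v)%N -> exists y, a (mk v) = Some y.
    by move=> v hv; apply: hD; [exact: mkinN | exists j; rewrite ffunE (negbTE hj)].
  have heps : u i (pi i) = 1.
    have [|y1 e1] := mkD (fw (pi i) + K1)%N; first lia.
    have := formula _ _ e1 i; have := inNP (hdom _ _ e1).2 (pi i).
    rewrite ffunE eqxx; case: (hpi i).1 => -> //; lia.
  have hc1 : (K1 <= fw (pi i))%N.
    have [|y1 e1] := mkD 1%N; first lia.
    have := formula _ _ e1 i; have := inNP (hdom _ _ e1).2 (pi i).
    rewrite ffunE eqxx heps; lia.
  have hc2 : (fw (pi i) <= K1)%N.
    have [j' hj'] := other (pi i).
    pose y' : point n := [ffun k => if k == pi i then 1%N else K2].
    have hy1 : inN y' by apply/forallP => k; rewrite ffunE; case: ifP.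
    have hy2 : exists j, (K2 <= y' j)%N by exists j'; rewrite ffunE (negbTE hj').
    have [x1 e1] := hR y' hy1 hy2.
    have := formula _ _ e1 i; have := inNP (hdom _ _ e1).1 i.
    rewrite ffunE eqxx heps; lia.
  have := formula _ _ e i; rewrite heps; lia.
exists (perm pi_inj) => x y e; apply/ffunP => k; rewrite ffunE.
have hk : pi ((perm pi_inj)^-1 k)%g = k by rewrite -(permE pi_inj) permKV.
by rewrite -{1}hk (key _ _ e).
Qed.
End Core.

Section Main.
Variable n : nat.
Hypothesis hn : (1 < n)%N.
Implicit Types (x y : point n) (p q : 'S_n) (a b e : pmapN n).

Let i0 : 'I_n := Ordinal (ltnW hn).

Lemma sigma_IN p : IN (sigma p).
Proof.
split; [|split; [|split; [|split]]].
- by move=> x y; rewrite /sigma; case: ifP => hx // [<-]; rewrite act_inN.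
- move=> x y z; rewrite /sigma; case: ifP => hx //; case: ifP => hy // [<-] [].
  by move/(congr1 (fun z => act z (p^-1)%g)); rewrite !actK => ->.
- by move=> x y x' y'; rewrite /sigma; case: ifP => hx //; case: ifP => hy // [<-] [<-];
    rewrite act_dist2.
- by exists [::] => x hx; rewrite /sigma hx.
- exists [::] => y hy hn'; exfalso; apply: (hn' (act y (p^-1)%g)).
  by rewrite /sigma act_inN hy actKV.
Qed.

Lemma sigmaM p q : pcompN (sigma p) (sigma q) = sigma (p * q)%g.
Proof.
apply: functional_extensionality => x; rewrite /pcompN /sigma.
by case: ifP => hx //=; rewrite act_inN hx actM.
Qed.

Lemma sigma1 : @pidN n = sigma 1%g.
Proof. by apply: functional_extensionality => x; rewrite /pidN /sigma act1. Qed.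

Lemma sigma_unit p : unitIN (sigma p).
Proof.
split; first exact: sigma_IN.
exists (sigma (p^-1)%g); split; first exact: sigma_IN.
by rewrite !sigmaM mulgV mulVg -sigma1.
Qed.

Lemma agree_sigma p : agree (sigma p) p.
Proof. by move=> x y; rewrite /sigma; case: ifP => // _ [<-]. Qed.

Lemma sigma_inj p q : sigma p = sigma q -> p = q.
Proof.
move=> h; have hq : agree (sigma p) q by rewrite h; exact: agree_sigma.
have hx : inN (dpt n 1) by apply: dpt_inN.
have E : sigma p (dpt n 1) = Some (act (dpt n 1) p) by rewrite /sigma hx.
have := @agree_uniq n (sigma p) p q (dpt n 1) (act (dpt n 1) p) (@agree_sigma p) hq E.
by apply; apply: dpt_inj.
Qed.

Lemma agree_uniqIN a p q : IN a -> agree a p -> agree a q -> p = q.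
Proof.
move=> ha hp hq; have [K [hK hD]] := big_dom ha.
have [|y e] := hD (dpt n K) (dpt_inN n hK); first by exists i0; rewrite ffunE leq_addr.
exact: agree_uniq hp hq e (@dpt_inj n K).
Qed.

Lemma unit_sigma s : unitIN s -> exists p, s = sigma p.
Proof.
move=> [hs [t [ht [e1 e2]]]]; have [p hp] := core hn hs.
exists p; apply: functional_extensionality => x.
have [hdom _] := hs.
case hx: (inN x).
  have := congr1 (fun f => f x) e1; rewrite /pcompN /pidN /sigma hx.
  case e: (s x) => [y|] /= => [_|//]; by rewrite (hp _ _ e).
rewrite /sigma hx; case e: (s x) => [y|] //.
by have := (hdom _ _ e).1; rewrite hx.
Qed.

Lemma idemp_pid e : idemp e -> forall y z, e y = Some z -> z = y.
Proof.
move=> [[hdom [hinj _]] he] y z ez.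
have := congr1 (fun f => f y) he; rewrite /pcompN ez /= => ezz.
by rewrite (hinj _ _ _ ez ezz).
Qed.

Lemma unit_part_agree a s : unit_part a s -> exists p, s = sigma p /\ agree a p.
Proof.
move=> [hu [e [he ->]]]; have [p ->] := unit_sigma hu.
exists p; split => // x z; rewrite /pcompN /sigma; case: ifP => //= _ ez.
by rewrite (idemp_pid he ez).
Qed.

Definition pidp e := forall y z, e y = Some z -> z = y /\ inN y.

Lemma pid_idemp e : pidp e ->
  (exists s : seq (point n), forall x, inN x -> e x = None -> x \in s) -> idemp e.
Proof.
move=> hp [s hs]; split; last first.
  apply: functional_extensionality => y; rewrite /pcompN.
  by case E: (e y) => [z|] //=; have [hz _] := hp _ _ E; subst z.
split; [|split; [|split; [|split]]].
- by move=> x y E; have [-> h] := hp _ _ E.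
- by move=> x y z E1 E2; have [<- _] := hp _ _ E1; have [<- _] := hp _ _ E2.
- by move=> x y x' y' E1 E2; have [-> _] := hp _ _ E1; have [-> _] := hp _ _ E2.
- by exists s.
- exists s => y hy hne; apply: hs => //.
  case E: (e y) => [z|] //; have [ez _] := hp _ _ E; by exfalso; apply: (hne y); rewrite E ez.
Qed.

Lemma pid_comp e1 e2 : pidp e1 -> pidp e2 -> pidp (pcompN e1 e2).
Proof.
move=> h1 h2 y z; rewrite /pcompN; case E: (e1 y) => [w|] //= E2.
have [hw hy] := h1 _ _ E; subst w; have [hz _] := h2 _ _ E2; by subst z.
Qed.

Definition epart a p := pcompN (sigma (p^-1)%g) a.

Lemma epart_app a p y : inN y -> epart a p y = a (act y (p^-1)%g).
Proof. by move=> hy; rewrite /epart /pcompN /sigma hy. Qed.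

Lemma epart_pid a p : agree a p -> pidp (epart a p).
Proof.
move=> hp y z; rewrite /epart /pcompN /sigma; case: ifP => hy //= E.
by rewrite (hp _ _ E) actKV.
Qed.

Lemma epart_cof a p : IN a ->
  exists s : seq (point n), forall y, inN y -> epart a p y = None -> y \in s.
Proof.
move=> [_ [_ [_ [[s hs] _]]]]; exists (map (fun z => act z p) s) => y hy E.
rewrite -(actKV y p); apply: map_f; apply: hs; first by rewrite act_inN.
by rewrite -epart_app.
Qed.

Lemma unit_part_sigma a p : IN a -> agree a p -> unit_part a (sigma p).
Proof.
move=> ha hp; split; first exact: sigma_unit.
exists (epart a p); split; first exact: pid_idemp (epart_pid hp) (epart_cof p ha).
apply: functional_extensionality => x; rewrite /pcompN /sigma.
case hx: (inN x) => /=; first by rewrite epart_app ?act_inN // actK.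
case E: (a x) => [y|] //; have [hdom _] := ha; by have := (hdom _ _ E).1; rewrite hx.
Qed.

Lemma part1 a : IN a -> exists! s, unit_part a s.
Proof.
move=> ha; have [p hp] := core hn ha.
exists (sigma p); split; first exact: unit_part_sigma.
move=> s' /unit_part_agree [q [-> hq]].
by rewrite (agree_uniqIN ha hp hq).
Qed.

Lemma part2 a b s t : IN a -> IN b -> unit_part a s -> unit_part b t ->
  (Cmg a b <-> s = t).
Proof.
move=> ha hb /unit_part_agree [p [-> hp]] /unit_part_agree [q [-> hq]].
split.
  move=> [e [he hab]]; congr sigma.
  have hpe := idemp_pid he.
  have [Ka [hKa hDa]] := big_dom ha.
  have [Ke [hKe hDe]] := big_dom he.1.
  pose x := dpt n (maxn Ka Ke).
  have hx : inN x by apply: dpt_inN; lia.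
  have [|y E] := hDa x hx; first by exists i0; rewrite ffunE; lia.
  have hy := (ha.1 _ _ E).2.
  have [|z Ez] := hDe y hy.
    by exists i0; rewrite (hp _ _ E) !ffunE; lia.
  have hc : pcompN a e x = Some y by rewrite /pcompN E /= Ez (hpe _ _ Ez).
  have ap : agree (pcompN a e) p.
    move=> x' z'; rewrite /pcompN; case E': (a x') => [y'|] //= Ez'.
    by rewrite (hpe _ _ Ez') (hp _ _ E').
  have aq : agree (pcompN a e) q.
    rewrite hab => x' z'; rewrite /pcompN; case E': (b x') => [y'|] //= Ez'.
    by rewrite (hpe _ _ Ez') (hq _ _ E').
  exact: agree_uniq ap aq hc (@dpt_inj n _).
move=> /sigma_inj epq; subst q.
exists (pcompN (epart a p) (epart b p)); split.
  apply: pid_idemp; first exact: pid_comp (epart_pid hp) (epart_pid hq).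
  have [s1 h1] := epart_cof p ha; have [s2 h2] := epart_cof p hb.
  exists (s1 ++ s2) => y hy; rewrite /pcompN mem_cat.
  case E: (epart a p y) => [z|] /=; last by rewrite h1.
  have [-> _] := epart_pid hp E; by move=> E2; rewrite h2 ?orbT.
apply: functional_extensionality => x; rewrite /pcompN.
case Ea: (a x) => [y|]; case Eb: (b x) => [y'|] /=.
- by have ey := hp _ _ Ea; have ey' := hq _ _ Eb; subst y y'.
- have hy := (ha.1 _ _ Ea).2; have ey := hp _ _ Ea; subst y.
  by rewrite epart_app // actK Ea /= epart_app // actK Eb.
- have hy := (hb.1 _ _ Eb).2; have ey := hq _ _ Eb; subst y'.
  by rewrite epart_app // actK Ea.
- by [].
Qed.

End Main.

Definition psi n (s : pmapN n) : 'S_n := epsilon (inhabits 1%g) (fun p => s = sigma p).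
Definition phi n (a : pmapN n) : 'S_n := epsilon (inhabits 1%g) (fun p => agree a p).

Lemma psi_sigma n (p : 'S_n) : psi (sigma p) = p.
Proof.
have := epsilon_spec (inhabits 1%g) (fun q => sigma p = sigma q) (ex_intro _ p erefl).
by move/sigma_inj => h; rewrite /psi -h.
Qed.

Lemma phi_agree n (hn : 1 < n) (a : pmapN n) : IN a -> agree a (phi a).
Proof. move=> ha; rewrite /phi; apply: epsilon_spec; have [p hp] := core hn ha; by exists p. Qed.

Lemma comp_IN_dom n (hn : 1 < n) (a b : pmapN n) p : IN a -> IN b -> agree a p ->
  exists x y, pcompN a b x = Some y /\ injective (fun k => x k).
Proof.
move=> ha hb hp; have [Ka [hKa hDa]] := big_dom ha.
have [Kb [hKb hDb]] := big_dom hb.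
pose i0 : 'I_n := Ordinal (ltnW hn).
pose x := dpt n (maxn Ka Kb).
have hx : inN x by apply: dpt_inN; lia.
have [|y E] := hDa x hx; first by exists i0; rewrite ffunE; lia.
have hy := (ha.1 _ _ E).2.
have [|z Ez] := hDb y hy; first by exists i0; rewrite (hp _ _ E) !ffunE; lia.
by exists x, z; split; [rewrite /pcompN E | exact: dpt_inj].
Qed.

Theorem theorem3p7 (n : nat) (hn : 2 <= n) :
  (* sigma_alpha exists and is unique *)
  (forall a : pmapN n, IN a -> exists! s, unit_part a s) /\
  (* alpha C_mg beta iff sigma_alpha = sigma_beta *)
  (forall a b s t : pmapN n, IN a -> IN b -> unit_part a s -> unit_part b t ->
     (Cmg a b <-> s = t)) /\
  (* H(I) is isomorphic to S_n via psi, and alpha |-> psi(sigma_alpha) is a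
     surjective homomorphism IN^n_oo -> S_n whose kernel is C_mg, i.e. the
     natural homomorphism onto IN^n_oo / C_mg = S_n *)
  exists psi : pmapN n -> 'S_n,
    (forall s t, unitIN s -> unitIN t -> psi (pcompN s t) = (psi s * psi t)%g) /\
    (forall s t, unitIN s -> unitIN t -> psi s = psi t -> s = t) /\
    (forall p : 'S_n, exists s, unitIN s /\ psi s = p) /\
    exists phi : pmapN n -> 'S_n,
      (forall a s, IN a -> unit_part a s -> phi a = psi s) /\
      (forall a b, IN a -> IN b -> phi (pcompN a b) = (phi a * phi b)%g) /\
      (forall p : 'S_n, exists a, IN a /\ phi a = p) /\
      (forall a b, IN a -> IN b -> (phi a = phi b <-> Cmg a b)).
Proof.
split; first exact: (part1 hn).
split; first exact: (part2 hn).
exists (@psi n); split.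
  move=> s t /unit_sigma -/(_ hn) [p ->] /unit_sigma -/(_ hn) [q ->].
  by rewrite sigmaM !psi_sigma.
split.
  move=> s t /unit_sigma -/(_ hn) [p ->] /unit_sigma -/(_ hn) [q ->].
  by rewrite !psi_sigma // => ->.
split.
  by move=> p; exists (sigma p); split; [exact: sigma_unit | exact: psi_sigma].
exists (@phi n); split.
  move=> a s ha /unit_part_agree -/(_ hn) [p [-> hp]].
  rewrite psi_sigma; exact: (agree_uniqIN hn ha (phi_agree hn ha) hp).
split.
  move=> a b ha hb.
  have hpa := phi_agree hn ha; have hpb := phi_agree hn hb.
  have hab : agree (pcompN a b) (phi a * phi b)%g.
    move=> x z; rewrite /pcompN; case E: (a x) => [y|] //= Ez.
    by rewrite (hpb _ _ Ez) (hpa _ _ E) actM.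
  have hab' : agree (pcompN a b) (phi (pcompN a b)).
    by apply: epsilon_spec; exists (phi a * phi b)%g.
  have [x [z [E hx]]] := comp_IN_dom hn ha hb hpa.
  exact: agree_uniq hab' hab E hx.
split.
  move=> p; exists (sigma p); split; first exact: sigma_IN.
  exact: (agree_uniqIN hn (sigma_IN p) (phi_agree hn (sigma_IN p)) (@agree_sigma _ p)).
move=> a b ha hb.
rewrite (part2 hn ha hb (unit_part_sigma ha (phi_agree hn ha))
  (unit_part_sigma hb (phi_agree hn hb))).
by split => [->|/sigma_inj].
Qed.
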